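(* For a positive integer $\tau$ and $p\in[0,1]$, let \[ R_\tau(p) := \min \mathbb{E}\big[\#\{t\in\{0,1,\dots,\tau\} : X_t = 0\} \,\big|\, X_0 = 0\big], \] where the minimum is over all sequences of instructions, $(X_t)$ being the guided random walk following them. Then for any integers $0\le t_1\le t_2$, any $x\in\mathbb{Z}^2$, and any guided random walk $(X_t)$ (any sequence of instructions, any possibly random initial position $X_0$), \[ \mathbb{P}\big(X_t = x \text{ for some } t\in[t_1,t_2]\big) \le \frac{\mathbb{E}\big[\#\{t\in[t_1,t_2+\tau] : X_t = x\}\big]}{R_\tau(p)}. \]
   Context: Integer intervals $[a,b]$ denote $\{a,a+1,\dots,b\}$. A sequence of instructions is an infinite walk $(x_t)_{t\ge 0}$ in $\mathbb{Z}^2$ with $x_{t+1}-x_t\in\{(\pm1,0),(0,\pm1)\}$. The guided random walk with error probability $p$ following it is the process $(X_t)_{t\ge0}$ whose increments are independent (and independent of $X_0$), with $X_{t+1}-X_t = x_{t+1}-x_t$ with probability $1-p$, and $X_{t+1}-X_t$ uniformly distributed on $\{(\pm1,0),(0,\pm1)\}$ with probability $p$. *)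

(* Defs.v *)
From HB Require Import structures.
From mathcomp Require Import all_boot all_order all_algebra.
From mathcomp Require Import all_classical all_reals all_analysis.
Set Implicit Arguments. Unset Strict Implicit. Unset Printing Implicit Defensive.
Import Order.TTheory GRing.Theory Num.Theory.
Local Open Scope ring_scope.
Local Open Scope classical_set_scope.

Definition Z2 := (int * int)%type.

Definition steps : seq Z2 :=
  [:: ((1:int), (0:int)); ((-1:int), (0:int)); ((0:int), (1:int)); ((0:int), (-1:int))].

Definition instruction (x : nat -> Z2) : Prop := forall t, x t.+1 - x t \in steps.

(* Law of the increment X_{t+1}-X_t of the guided random walk following x:
   with prob. 1-p the instructed step x_{t+1}-x_t, with prob. p uniform
   on the four unit steps. *)
Definition step_prob {R : realType} (p : R) (x : nat -> Z2) (t : nat) (d : Z2) : R :=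
  (1 - p) * (d == x t.+1 - x t)%:R + p / 4%:R * (d \in steps)%:R.

Definition partial_sum (tau : nat) (s : {ffun 'I_tau -> 'I_4}) (t : nat) : Z2 :=
  (\sum_(i < tau | (i < t)%N) (nth (0 : Z2) steps (s i) : Z2))%R.

Definition visits0 (tau : nat) (s : {ffun 'I_tau -> 'I_4}) : nat :=
  (\sum_(t < tau.+1) nat_of_bool (partial_sum s t == 0%R))%N.

(* E[ #{t in [0,tau] : X_t = 0} | X_0 = 0 ] for the guided random walk following x,
   computed from the (product) law of the first tau increments. *)
Definition exp_visits0 {R : realType} (p : R) (x : nat -> Z2) (tau : nat) : R :=
  \sum_(s : {ffun 'I_tau -> 'I_4})
     (\prod_(i < tau) step_prob p x i (nth (0 : Z2) steps (s i))) * (visits0 s)%:R.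

(* R_tau(p) : minimum (infimum; it is attained) over all sequences of instructions. *)
Definition Rtau {R : realType} (p : R) (tau : nat) : R :=
  inf [set r | exists x, instruction x /\ r = exp_visits0 p x tau].

Definition guided_random_walk {d : measure_display} {T : measurableType d}
    {R : realType} (P : probability T R) (p : R) (x : nat -> Z2)
    (X : nat -> T -> Z2) : Prop :=
  [/\
      (forall t (A : set Z2), measurable (X t @^-1` A)),
      (forall t (dz : Z2),
          P [set w | X t.+1 w - X t w = dz] = (step_prob p x t dz)%:E) &
      (* X_0, X_1-X_0, X_2-X_1, ... are mutually independent (joint pmf factorises) *)
      (forall (n : nat) (z : Z2) (ds : nat -> Z2),
          P [set w | X 0%N w = z /\ forall i, (i < n)%N -> X i.+1 w - X i w = ds i]
          = (P [set w | X 0%N w = z] *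
             (\prod_(i < n) step_prob p x i (ds i))%:E)%E)].

(* Main.v *)
Require Import Defs.
From HB Require Import structures.
From mathcomp Require Import all_boot all_order all_algebra.
From mathcomp Require Import all_classical all_reals all_analysis.
From mathcomp Require Import ring lra zify.
From mathcomp Require Import measurable_realfun.
Import Order.TTheory GRing.Theory Num.Theory.
Local Open Scope ring_scope.
Local Open Scope classical_set_scope.
Set Implicit Arguments. Unset Strict Implicit. Unset Printing Implicit Defensive.

Lemma sum_shift_le (F : nat -> nat) m s n k : (m <= s)%N -> (s + k <= n)%N ->
  (\sum_(t < k) F (s + t) <= \sum_(m <= t < n) F t)%N.
Proof.
move=> ms skn.
rewrite (@big_cat_nat _ _ _ s m n) //; last by lia.
rewrite (@big_cat_nat _ _ _ (s + k) s n) //; last by lia.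
have -> : (\sum_(s <= t < s + k) F t = \sum_(t < k) F (s + t))%N.
  rewrite -{1}[s]add0n big_addn.
  have -> : (s + k - s = k)%N by lia.
  rewrite big_mkord.
  by apply: eq_bigr => i _; rewrite addnC.
exact: (leq_trans (leq_addr _ _) (leq_addl _ _)).
Qed.

Lemma le_sum1 (R : realType) (I : finType) (F : I -> R) j :
  (forall i, 0 <= F i) -> F j <= \sum_i F i.
Proof. by move=> H; rewrite (bigD1 j) //= lerDl sumr_ge0. Qed.

Lemma le_sum1_seq (R : realType) (r : seq nat) (F : nat -> R) j :
  uniq r -> j \in r -> (forall i, 0 <= F i) -> F j <= \sum_(i <- r) F i.
Proof. by move=> u jr H; rewrite (bigD1_seq j) //= lerDl sumr_ge0. Qed.
Lemma step_inj (i j : 'I_4) : nth (0:Z2) steps i = nth (0:Z2) steps j -> i = j.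
Proof.
by case: i j => [[|[|[|[|i]]]] Hi] [[|[|[|[|j]]]] Hj] //= _; apply/val_inj.
Qed.

Definition idx (dd : Z2) : 'I_4 := insubd ord0 (index dd steps).

Lemma nth_idx dd : dd \in steps -> nth (0:Z2) steps (idx dd) = dd.
Proof.
move=> H; rewrite /idx val_insubd.
have -> : (index dd steps < 4)%N by rewrite -[4%N]/(size steps) index_mem.
exact: nth_index.
Qed.

Lemma nth_steps_in (i : 'I_4) : nth (0:Z2) steps i \in steps.
Proof. by apply: mem_nth; case: i. Qed.

Section Comb.
Variables (R : realType) (p : R).
Hypothesis p01 : 0 <= p <= 1.

Lemma step_prob_ge0 (y : nat -> Z2) t dd : 0 <= step_prob p y t dd.
Proof.
case/andP: p01 => p0 p1.
rewrite /step_prob addr_ge0 // mulr_ge0 //; first by rewrite subr_ge0.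
by rewrite divr_ge0.
Qed.

Lemma sum_step_prob (y : nat -> Z2) t : y t.+1 - y t \in steps ->
  \sum_(j < 4) step_prob p y t (nth (0:Z2) steps j) = 1.
Proof.
move=> H; rewrite /step_prob !big_ord_recr big_ord0 /=.
by move: H; rewrite !inE => /or4P [] /eqP -> /=; field.
Qed.

Lemma sum_prod1 (y : nat -> Z2) (n : nat) : instruction y ->
  \sum_(b : {ffun 'I_n -> 'I_4}) \prod_(i < n) step_prob p y i (nth (0:Z2) steps (b i)) = 1.
Proof.
move=> Hy; rewrite -(bigA_distr_bigA (fun (i : 'I_n) (j : 'I_4) => step_prob p y i (nth (0:Z2) steps j))) /=.
by rewrite big1 // => i _; apply: sum_step_prob.
Qed.

Lemma visits0_ge1 n (b : {ffun 'I_n -> 'I_4}) : (1 <= visits0 b)%N.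
Proof.
have H0 : partial_sum b 0 = 0 by rewrite /partial_sum big_pred0.
by rewrite /visits0 big_ord_recl /= H0 eqxx.
Qed.

Lemma exp_visits0_ge1 (y : nat -> Z2) n : instruction y -> 1 <= exp_visits0 p y n.
Proof.
move=> Hy; rewrite /exp_visits0 -{1}(@sum_prod1 y n Hy).
apply: ler_sum => b _; rewrite ler_peMr //.
  by apply: prodr_ge0 => i _; apply: step_prob_ge0.
by rewrite ler1n visits0_ge1.
Qed.

End Comb.

Section Main.
Variables (R : realType) (p : R) (tau : nat) (d : measure_display) (T : measurableType d)
  (P : probability T R) (x : nat -> Z2) (X : nat -> T -> Z2) (t1 t2 : nat) (z : Z2).
Hypotheses (tau0 : (0 < tau)%N) (p01 : 0 <= p <= 1) (t12 : (t1 <= t2)%N)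
  (xi : instruction x) (grw : guided_random_walk P p x X).

Lemma mX t A : measurable (X t @^-1` A).
Proof. by case: grw => H _ _; apply: H. Qed.

Lemma mInc t dd : measurable [set w | X t.+1 w - X t w = dd].
Proof.
pose v n : Z2 := odflt ((0:int),(0:int)) (unpickle n).
have -> : [set w | X t.+1 w - X t w = dd] =
   \bigcup_n (X t @^-1` [set v n] `&` X t.+1 @^-1` [set v n + dd]).
  apply/seteqP; split => w /=.
  - move=> H; exists (pickle (X t w)) => //=; rewrite /v pickleK /=; split => //.
    by rewrite -H addrC subrK.
  - by move=> [n _ [/= -> ->]]; rewrite addrAC subrr add0r.
by apply: bigcupT_measurable => n; apply: measurableI; apply: mX.
Qed.

Lemma mE y n ds : measurable [set w | X 0 w = y /\ forall i, (i < n)%N -> X i.+1 w - X i w = ds i].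
Proof.
have -> : [set w | X 0 w = y /\ forall i, (i < n)%N -> X i.+1 w - X i w = ds i] =
  X 0 @^-1` [set y] `&` \bigcap_i (if (i < n)%N then [set w | X i.+1 w - X i w = ds i] else setT).
  apply/seteqP; split => w /=.
  - move=> [H1 H2]; split => // i _; case: ifP => // Hi; exact: H2.
  - move=> [H1 H2]; split => // i Hi; move: (H2 i I); by rewrite Hi.
apply: measurableI; first exact: mX.
by apply: bigcapT_measurable => i; case: ifP => _; [exact: mInc | exact: measurableT].
Qed.

Definition Aset := [set w | exists2 t, (t1 <= t <= t2)%N & X t w = z].

Lemma mA : measurable Aset.
Proof.
have -> : Aset = \bigcup_t (if (t1 <= t <= t2)%N then X t @^-1` [set z] else set0).
  apply/seteqP; split => w /=.
  - by move=> [t Ht Hx]; exists t => //; rewrite Ht.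
  - by move=> [t _]; case: ifP => // Ht Hx; exists t.
by apply: bigcupT_measurable => t; case: ifP => _; [exact: mX | exact: measurable0].
Qed.

Definition Good i := [set w | X i.+1 w - X i w \in steps].

Lemma Inc_disj t a b : a != b ->
  [set w | X t.+1 w - X t w = a] `&` [set w | X t.+1 w - X t w = b] = set0.
Proof.
move=> ab; apply/seteqP; split => w //= [H1 H2]; move: ab.
by rewrite -H1 -H2 eqxx.
Qed.

Lemma P_bad i : P (~` Good i) = 0%E.
Proof.
set I := fun dd : Z2 => [set w | X i.+1 w - X i w = dd].
have -> : Good i = I (1,0) `|` I (-1,0) `|` I (0,1) `|` I (0,-1).
  apply/seteqP; split => w; rewrite /Good /I /=.
  - by rewrite !inE => /or4P [] /eqP ->; [left;left;left|left;left;right|left;right|right].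
  - by move=> [[[]|]|] ->.
have mI dd : measurable (I dd) by apply: mInc.
rewrite probability_setC; last by repeat apply: measurableU.
rewrite !measureU //; try (repeat apply: measurableU => //).
- case: grw => _ H2 _.
  have E dd : (P : {content set T -> \bar R}) (I dd) = (step_prob p x i dd)%:E := H2 i dd.
  rewrite !E.
  have S := @sum_step_prob R p x i (xi i).
  rewrite !big_ord_recr big_ord0 /= add0r in S.
  by rewrite -!EFinD S subrr.
all: by rewrite ?setIUl !Inc_disj // ?setU0.
Qed.


Definition dget n (a : {ffun 'I_n -> 'I_4}) (i : nat) : Z2 :=
  if (insub i : option 'I_n) is Some j then nth (0:Z2) steps (a j) else 0.

Lemma dget_ord n (a : {ffun 'I_n -> 'I_4}) (i : 'I_n) : dget a i = nth (0:Z2) steps (a i).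
Proof. by rewrite /dget valK. Qed.

Lemma dget_lt n (a : {ffun 'I_n -> 'I_4}) (i : nat) (Hi : (i < n)%N) :
  dget a i = nth (0:Z2) steps (a (Ordinal Hi)).
Proof. by rewrite -dget_ord. Qed.

Definition ds s (a : {ffun 'I_s -> 'I_4}) (b : {ffun 'I_tau -> 'I_4}) (i : nat) : Z2 :=
  if (i < s)%N then dget a i else dget b (i - s).
Definition Sa s (a : {ffun 'I_s -> 'I_4}) := \sum_(i < s) dget a i.
Definition yv s (a : {ffun 'I_s -> 'I_4}) := z - Sa a.
Definition EE s (a : {ffun 'I_s -> 'I_4}) (b : {ffun 'I_tau -> 'I_4}) :=
  [set w | X 0 w = yv a /\ forall i, (i < s + tau)%N -> X i.+1 w - X i w = ds a b i].
Definition pia s (a : {ffun 'I_s -> 'I_4}) := \prod_(i < s) step_prob p x i (dget a i).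
Definition rho s (b : {ffun 'I_tau -> 'I_4}) :=
  \prod_(i < tau) step_prob p x (s + i) (nth (0:Z2) steps (b i)).
Definition first s (a : {ffun 'I_s -> 'I_4}) : bool :=
  [forall t : 'I_s, (t1 <= t)%N ==> (\sum_(i < t) dget a i != Sa a)].

Lemma mEE s a b : measurable (@EE s a b).
Proof. exact: mE. Qed.

Lemma PE s a b : P (@EE s a b) = (P [set w | X 0 w = yv a] * (pia a * rho s b)%:E)%E.
Proof.
case: grw => _ _ H3; rewrite /EE H3; congr (_ * _)%E; congr EFin.
rewrite big_split_ord /=; congr (_ * _); apply: eq_bigr => i _; rewrite /ds /=.
- by rewrite ltn_ord.
- by rewrite ltnNge leq_addr /= addKn dget_ord.
Qed.

Lemma X_tel w t : X t w = X 0 w + \sum_(i < t) (X i.+1 w - X i w).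
Proof. by rewrite -(big_mkord xpredT (fun i => X i.+1 w - X i w)) telescope_sumr // addrC subrK. Qed.

Lemma X_tel2 w s t : X (s + t) w = X s w + \sum_(i < t) (X (s + i).+1 w - X (s + i) w).
Proof.
have := telescope_sumr (fun k => X (s + k) w) (leq0n t).
rewrite big_mkord addn0 => H.
under eq_bigr do rewrite -addnS.
by rewrite H addrC subrK.
Qed.

Lemma EE_inc s a b w : @EE s a b w ->
  (forall i : 'I_s, X i.+1 w - X i w = nth (0:Z2) steps (a i)) /\
  (forall i : 'I_tau, X (s + i).+1 w - X (s + i) w = nth (0:Z2) steps (b i)).
Proof.
move=> [_ H]; split => i.
- rewrite H; last by rewrite (leq_trans (ltn_ord i)) // leq_addr.
  by rewrite /ds ltn_ord dget_ord.
- rewrite H; last by rewrite ltn_add2l.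
  by rewrite /ds ltnNge leq_addr /= addKn dget_ord.
Qed.

Lemma EE_Xt s a b w (t : nat) : (t <= s)%N -> @EE s a b w ->
  X t w = yv a + \sum_(i < t) dget a i.
Proof.
move=> ts HE; have [H1 _] := EE_inc HE.
rewrite X_tel (proj1 HE); congr (_ + _); apply: eq_bigr => i _.
have Hi : (i < s)%N by apply: leq_trans ts.
by rewrite (dget_lt a Hi) -(H1 (Ordinal Hi)).
Qed.

Lemma EE_Xs s a b w : @EE s a b w -> X s w = z.
Proof. by move=> HE; rewrite (EE_Xt (leqnn s) HE) /yv /Sa subrK. Qed.

Lemma EE_Xst s a b w t : (t <= tau)%N -> @EE s a b w -> X (s + t) w = z + partial_sum b t.
Proof.
move=> tt HE; have [_ H2] := EE_inc HE.
rewrite X_tel2 (EE_Xs HE); congr (_ + _).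
rewrite /partial_sum (big_ord_widen _ (fun i => X (s + i).+1 w - X (s + i) w) tt).
by apply: eq_bigr => i _; rewrite H2.
Qed.

Lemma EE_uniq s a a' b b' w : @EE s a b w -> @EE s a' b' w -> a = a' /\ b = b'.
Proof.
move=> /EE_inc [Ha Hb] /EE_inc [Ha' Hb']; split; apply/ffunP => i; apply: step_inj.
- by rewrite -Ha -Ha'.
- by rewrite -Hb -Hb'.
Qed.

Lemma P1 w : (\1_Aset w : R) <= \sum_(i < t2 + tau) (\1_(~` Good i) w : R) +
  \sum_(s <- index_iota t1 t2.+1) \sum_(a : {ffun 'I_s -> 'I_4})
     \sum_(b : {ffun 'I_tau -> 'I_4}) (first a)%:R * (\1_(EE a b) w : R).
Proof.
have nn1 : 0 <= \sum_(i < t2 + tau) (\1_(~` Good i) w : R).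
  by apply: sumr_ge0 => i _; rewrite indicE.
have nn2 : 0 <= \sum_(s <- index_iota t1 t2.+1) \sum_(a : {ffun 'I_s -> 'I_4})
     \sum_(b : {ffun 'I_tau -> 'I_4}) (first a)%:R * (\1_(EE a b) w : R).
  by apply: sumr_ge0 => s _; apply: sumr_ge0 => a _; apply: sumr_ge0 => b _;
     rewrite indicE mulr_ge0.
rewrite indicE; case: (boolP (w \in Aset)) => [/set_mem HA|_]; last by rewrite addr_ge0.
case: (pselect (exists i : 'I_(t2 + tau), ~ Good i w)) => [[i Hi]|hg].
  rewrite -[1%:R]addr0; apply: lerD => //.
  apply: le_trans _ (le_sum1 i _); first by rewrite indicE mem_set.
  by move=> j; rewrite indicE.
have good : forall i, (i < t2 + tau)%N -> X i.+1 w - X i w \in steps.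
  move=> i Hi; apply: contrapT => H; apply: hg; by exists (Ordinal Hi).
have exs : exists t, (t1 <= t <= t2)%N && (X t w == z).
  by case: HA => t Ht Hx; exists t; rewrite Ht Hx eqxx.
case: (ex_minnP exs) => s /andP [/andP [ts st] /eqP Xs] smin.
pose a := [ffun i : 'I_s => idx (X i.+1 w - X i w)].
pose b := [ffun i : 'I_tau => idx (X (s + i).+1 w - X (s + i) w)].
have ga : forall i : 'I_s, nth (0:Z2) steps (a i) = X i.+1 w - X i w.
  move=> i; rewrite ffunE nth_idx // good //; have := ltn_ord i; lia.
have gb : forall i : 'I_tau, nth (0:Z2) steps (b i) = X (s + i).+1 w - X (s + i) w.
  move=> i; rewrite ffunE nth_idx // good //; have := ltn_ord i; lia.
have sumA : forall t, (t <= s)%N -> \sum_(i < t) dget a i = \sum_(i < t) (X i.+1 w - X i w).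
  move=> t ts'; apply: eq_bigr => i _.
  have Hi : (i < s)%N by apply: leq_trans ts'.
  by rewrite (dget_lt a Hi) ga.
have HE : EE a b w.
  split.
    by rewrite /yv /Sa sumA // -Xs (X_tel w s) addrK.
  move=> i Hi; rewrite /ds; case: ifP => His.
    by rewrite (dget_lt a His) ga.
  have Hi' : (i - s < tau)%N by move: His => /negbT; rewrite -leqNgt; lia.
  rewrite (dget_lt b Hi') gb /=.
  by have -> : (s + (i - s) = i)%N by move: His => /negbT; rewrite -leqNgt; lia.
have Hf : first a.
  apply/forallP => t; apply/implyP => t1t; apply/eqP => Heq.
  have : (s <= t)%N.
    apply: smin; rewrite t1t /= (leq_trans (ltnW (ltn_ord t)) st) /=.
    rewrite (X_tel w t) -sumA; last exact: ltnW.
    by rewrite Heq /Sa sumA // -X_tel Xs eqxx.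
  by rewrite leqNgt ltn_ord.
rewrite -[1%:R]add0r; apply: lerD => //.
have sr : s \in index_iota t1 t2.+1 by rewrite mem_index_iota ts ltnS.
apply: le_trans _ (le_sum1_seq (iota_uniq _ _) sr _); last first.
  by move=> s'; apply: sumr_ge0 => a' _; apply: sumr_ge0 => b' _; rewrite indicE mulr_ge0.
apply: le_trans _ (le_sum1 a _); last first.
  by move=> a'; apply: sumr_ge0 => b' _; rewrite indicE mulr_ge0.
apply: le_trans _ (le_sum1 b _); last by move=> b'; rewrite indicE mulr_ge0.
by rewrite Hf indicE mem_set // mul1r.
Qed.

Lemma addr_eqself (u : Z2) : (z + u == z) = (u == 0).
Proof. by rewrite -{2}(addr0 z) (inj_eq (addrI z)). Qed.

Lemma P2 w : \sum_(s <- index_iota t1 t2.+1) \sum_(a : {ffun 'I_s -> 'I_4})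
     \sum_(b : {ffun 'I_tau -> 'I_4}) (first a)%:R * (visits0 b)%:R * (\1_(EE a b) w : R)
  <= ((\sum_(t1 <= t < (t2 + tau).+1) (X t w == z))%N)%:R.
Proof.
pose h s := (X s w == z) && [forall t : 'I_s, (t1 <= t)%N ==> (X t w != z)].
pose V s := (\sum_(t < tau.+1) (X (s + t) w == z))%N.
have inner : forall s, \sum_(a : {ffun 'I_s -> 'I_4})
     \sum_(b : {ffun 'I_tau -> 'I_4}) (first a)%:R * (visits0 b)%:R * (\1_(EE a b) w : R)
     <= ((h s) * V s)%N%:R.
  move=> s; case: (pselect (exists (a : {ffun 'I_s -> 'I_4}) (b : {ffun 'I_tau -> 'I_4}), first a /\ EE a b w)) => [[a0 [b0 [F0 E0]]] | none].
  - rewrite (bigD1 a0) //= [X in _ + X <= _]big1 ?addr0; last first.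
      move=> a ne; apply: big1 => b _; rewrite indicE; case: (boolP (w \in EE a b)) => [/set_mem Hw|_]; last by rewrite mulr0.
      by case: (EE_uniq Hw E0) => ea _; rewrite ea eqxx in ne.
    rewrite (bigD1 b0) //= [X in _ + X <= _]big1 ?addr0; last first.
      move=> b ne; rewrite indicE; case: (boolP (w \in EE a0 b)) => [/set_mem Hw|_]; last by rewrite mulr0.
      by case: (EE_uniq Hw E0) => _ eb; rewrite eb eqxx in ne.
    rewrite F0 indicE mem_set // mul1r mulr1.
    have -> : h s = true.
      apply/andP; split; first by rewrite (EE_Xs E0).
      apply/forallP => t; apply/implyP => tt; rewrite (EE_Xt (ltnW (ltn_ord t)) E0) /yv.
      move/forallP: F0 => /(_ t); rewrite tt /= => ne.
      apply: contra ne => /eqP H; apply/eqP.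
      by rewrite -(addKr (z - Sa a0) (\sum_(i < t) dget a0 i)) H opprB subrK.
    have -> : V s = visits0 b0.
      rewrite /V /visits0; apply: eq_bigr => t _.
      by rewrite (EE_Xst _ E0) ?addr_eqself // -ltnS ltn_ord.
    by rewrite mul1n.
  - rewrite big1 ?ler0n // => a _; rewrite big1 // => b _.
    case: (boolP (first a)) => Fa; last by rewrite !mul0r.
    rewrite indicE; case: (boolP (w \in EE a b)) => [/set_mem Hw|_]; last by rewrite mulr0.
    by exfalso; apply: none; exists a, b.
have uniq_h : forall s s', (t1 <= s)%N -> (t1 <= s')%N -> h s -> h s' -> s = s'.
  move=> s s' ts ts' /andP [/eqP Hs Fs] /andP [/eqP Hs' Fs'].
  apply/eqP; rewrite eqn_leq; apply/andP; split; rewrite leqNgt; apply/negP => lt.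
  - by have := forallP Fs (Ordinal lt); rewrite /= ts' Hs' eqxx.
  - by have := forallP Fs' (Ordinal lt); rewrite /= ts Hs eqxx.
apply: (le_trans (ler_sum _ (fun s _ => inner s))).
rewrite -natr_sum ler_nat.
case: (pselect (exists2 s0, s0 \in index_iota t1 t2.+1 & h s0)) => [[s0 Hs0 hs0] | none].
- rewrite (bigD1_seq s0) //= ?iota_uniq // big1_seq => [|s /andP [ne Hs]].
    rewrite hs0 mul1n addn0 /V.
    move: Hs0; rewrite mem_index_iota => /andP [ts0 s0t].
    apply: sum_shift_le => //; lia.
  case: (boolP (h s)) => // hs.
  move: ne; rewrite (uniq_h s s0) ?eqxx //.
  + by move: Hs; rewrite mem_index_iota => /andP [].
  + by move: Hs0; rewrite mem_index_iota => /andP [].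
- rewrite big1_seq // => s /andP [_ Hs]; case: (boolP (h s)) => // hs.
  by exfalso; apply: none; exists s.
Qed.

Lemma mfEFin (f : T -> R) : measurable_fun [set: T] f -> measurable_fun [set: T] (EFin \o f).
Proof. by move=> mf; apply/measurable_EFinP. Qed.

Lemma mind (c : R) (E : set T) : measurable E -> measurable_fun [set: T] (fun w => c * (\1_E w : R)).
Proof.
move=> mE'; apply: (@measurable_realfun.measurable_funM _ _ _ _ (fun=> c) (\1_E)) => //.
Qed.

Lemma int_sum (I : Type) (r : seq I) (f : I -> T -> R) :
  (forall j, measurable_fun [set: T] (f j)) -> (forall j w, 0 <= f j w) ->
  (\int[P]_w (\sum_(j <- r) f j w)%:E = \sum_(j <- r) \int[P]_w (f j w)%:E)%E.
Proof.
move=> mf f0.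
under eq_integral => w _ do rewrite -sumEFin.
apply: ge0_integral_sum => //.
- by move=> j; apply: mfEFin.
- by move=> j w _; rewrite lee_fin.
Qed.

Lemma int_indic (c : R) (E : set T) : 0 <= c -> measurable E ->
  (\int[P]_w (c * \1_E w)%:E = c%:E * P E)%E.
Proof.
move=> c0 mE'.
under eq_integral => w _ do rewrite EFinM.
rewrite ge0_integralZl_EFin //.
- by rewrite integral_indic ?setIT.
- by apply: mfEFin; exact: measurable_realfun.measurable_indic.
Qed.

Definition Q y := fine (P [set w | X 0 w = y]).

Lemma PQ y : P [set w | X 0 w = y] = (Q y)%:E.
Proof.
have mS : measurable [set w | X 0 w = y] := mX 0 [set y].
by rewrite /Q fineK // fin_num_measure.
Qed.

Lemma Q_ge0 y : 0 <= Q y.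
Proof. by rewrite /Q fine_ge0. Qed.

Lemma PEr s a b : P (@EE s a b) = (Q (yv a) * (pia a * rho s b))%:E.
Proof. by rewrite PE PQ EFinM. Qed.

Lemma instr_shift s : instruction (fun t => x (s + t)).
Proof. by move=> t /=; rewrite addnS; apply: xi. Qed.

Lemma rho_shift s b : rho s b = \prod_(i < tau) step_prob p (fun t => x (s + t)) i (nth (0:Z2) steps (b i)).
Proof. by apply: eq_bigr => i _; rewrite /step_prob /= addnS. Qed.

Lemma sum_rho s : \sum_(b : {ffun 'I_tau -> 'I_4}) rho s b = 1.
Proof.
under eq_bigr do rewrite rho_shift.
exact: sum_prod1 (instr_shift s).
Qed.

Lemma sum_rho_vis s : \sum_(b : {ffun 'I_tau -> 'I_4}) rho s b * (visits0 b)%:R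
  = exp_visits0 p (fun t => x (s + t)) tau.
Proof. by apply: eq_bigr => b _; rewrite rho_shift. Qed.

Lemma pia_ge0 s a : 0 <= @pia s a.
Proof. by apply: prodr_ge0 => i _; apply: step_prob_ge0. Qed.

Lemma rho_ge0 s b : 0 <= rho s b.
Proof. by apply: prodr_ge0 => i _; apply: step_prob_ge0. Qed.


Lemma mGood i : measurable (Good i).
Proof.
set I := fun dd : Z2 => [set w | X i.+1 w - X i w = dd].
have -> : Good i = I (1,0) `|` I (-1,0) `|` I (0,1) `|` I (0,-1).
  apply/seteqP; split => w; rewrite /Good /I /=.
  - by rewrite !inE => /or4P [] /eqP ->; [left;left;left|left;left;right|left;right|right].
  - by move=> [[[]|]|] ->.
by repeat apply: measurableU; apply: mInc.
Qed.

Lemma mF3 (c : forall s, {ffun 'I_s -> 'I_4} -> {ffun 'I_tau -> 'I_4} -> R) s :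
  measurable_fun [set: T] (fun w => \sum_(a : {ffun 'I_s -> 'I_4}) \sum_(b : {ffun 'I_tau -> 'I_4})
     c s a b * (\1_(EE a b) w : R)).
Proof.
apply: measurable_sum => a; apply: measurable_sum => b; apply: mind; exact: mEE.
Qed.

Lemma mF2 (c : forall s, {ffun 'I_s -> 'I_4} -> {ffun 'I_tau -> 'I_4} -> R) s a :
  measurable_fun [set: T] (fun w => \sum_(b : {ffun 'I_tau -> 'I_4})
     c s a b * (\1_(EE a b) w : R)).
Proof. apply: measurable_sum => b; apply: mind; exact: mEE. Qed.

Lemma int_F (c : forall s, {ffun 'I_s -> 'I_4} -> {ffun 'I_tau -> 'I_4} -> R)
  (c0 : forall s a b, 0 <= c s a b) :
  (\int[P]_w (\sum_(s <- index_iota t1 t2.+1) \sum_(a : {ffun 'I_s -> 'I_4})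
     \sum_(b : {ffun 'I_tau -> 'I_4}) c s a b * (\1_(EE a b) w : R))%:E =
   (\sum_(s <- index_iota t1 t2.+1) \sum_(a : {ffun 'I_s -> 'I_4})
     \sum_(b : {ffun 'I_tau -> 'I_4}) c s a b * (Q (yv a) * (pia a * rho s b)))%:E)%E.
Proof.
rewrite int_sum; last 2 first.
- by move=> s; apply: mF3.
- by move=> s w; apply: sumr_ge0 => a _; apply: sumr_ge0 => b _; rewrite mulr_ge0 // indicE.
rewrite -sumEFin; apply: eq_bigr => s _.
rewrite int_sum; last 2 first.
- by move=> a; apply: mF2.
- by move=> a w; apply: sumr_ge0 => b _; rewrite mulr_ge0 // indicE.
rewrite -sumEFin; apply: eq_bigr => a _.
rewrite int_sum; last 2 first.
- by move=> b; apply: mind; exact: mEE.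
- by move=> b w; rewrite mulr_ge0 // indicE.
rewrite -sumEFin; apply: eq_bigr => b _.
by rewrite int_indic // ?PEr -?EFinM //; exact: mEE.
Qed.

Lemma main_ineq :
  (P Aset <= \int[P]_w ((\sum_(t1 <= t < (t2 + tau).+1) (X t w == z))%N%:R)%:E
      * ((Rtau p tau)^-1)%:E)%E.
Proof.
set L := \sum_(s <- index_iota t1 t2.+1) \sum_(a : {ffun 'I_s -> 'I_4})
   (first a)%:R * Q (yv a) * pia a.
have L0 : 0 <= L.
  by apply: sumr_ge0 => s _; apply: sumr_ge0 => a _; rewrite !mulr_ge0 // ?Q_ge0 ?pia_ge0.
have hl : has_lbound [set r | exists y, instruction y /\ r = exp_visits0 p y tau].
  by exists 0 => r [y [Hy ->]]; apply: le_trans (exp_visits0_ge1 p01 tau Hy).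
have Rge1 : 1 <= Rtau p tau.
  apply: lb_le_inf; first by exists (exp_visits0 p x tau); exists x.
  by move=> r [y [Hy ->]]; exact: exp_visits0_ge1.
have Rle : forall s, Rtau p tau <= exp_visits0 p (fun t => x (s + t)) tau.
  move=> s; apply: (ge_inf hl); exists (fun t => x (s + t)); split => //.
  exact: instr_shift.
have R0 : 0 < Rtau p tau by apply: lt_le_trans Rge1.
have stepA : (P Aset <= L%:E)%E.
  have -> : P Aset = (\int[P]_w (\1_Aset w)%:E)%E.
    by rewrite integral_indic ?setIT //; exact: mA.
  set F1 := fun w => \sum_(i < t2 + tau) (\1_(~` Good i) w : R).
  set F2 := fun w => \sum_(s <- index_iota t1 t2.+1) \sum_(a : {ffun 'I_s -> 'I_4})
     \sum_(b : {ffun 'I_tau -> 'I_4}) (first a)%:R * (\1_(EE a b) w : R).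
  have mF1 : measurable_fun [set: T] F1.
    apply: measurable_sum => i; apply: measurable_indic; apply: measurableC; exact: mGood.
  have mF2' : measurable_fun [set: T] F2.
    by apply: measurable_sum => s; apply: (mF3 (fun s a b => (first a)%:R)).
  have F10 : forall w, 0 <= F1 w by move=> w; apply: sumr_ge0 => i _; rewrite indicE.
  have F20 : forall w, 0 <= F2 w.
    by move=> w; apply: sumr_ge0 => s _; apply: sumr_ge0 => a _; apply: sumr_ge0 => b _;
       rewrite mulr_ge0 // indicE.
  apply: (@le_trans _ _ (\int[P]_w (F1 w + F2 w)%:E)%E).
    apply: ge0_le_integral => //.
    - by apply: mfEFin; apply: measurable_indic; exact: mA.
    - by apply: mfEFin; apply: measurable_funD.
    - by move=> w _; rewrite lee_fin; apply: P1.
  under eq_integral => w _ do rewrite EFinD.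
  rewrite ge0_integralD //; last 4 first.
  - by move=> w _; rewrite lee_fin.
  - exact: mfEFin.
  - by move=> w _; rewrite lee_fin.
  - exact: mfEFin.
  rewrite int_sum; last 2 first.
  - by move=> i; apply: measurable_indic; apply: measurableC; exact: mGood.
  - by move=> i w; rewrite indicE.
  rewrite big1 ?add0e; last first.
    move=> i _; rewrite integral_indic ?setIT //; first exact: P_bad.
    by apply: measurableC; exact: mGood.
  rewrite /F2 (@int_F (fun s a b => (first a)%:R)) // lee_fin /L.
  apply: ler_sum => s _; apply: ler_sum => a _.
  rewrite (eq_bigr (fun b => ((first a)%:R * Q (yv a) * pia a) * rho s b)); last first.
    by move=> b _; rewrite !mulrA.
  by rewrite -mulr_sumr sum_rho mulr1.
have stepB : ((L * Rtau p tau)%:E <=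
   \int[P]_w ((\sum_(t1 <= t < (t2 + tau).+1) (X t w == z))%N%:R)%:E)%E.
  set G := fun w => \sum_(s <- index_iota t1 t2.+1) \sum_(a : {ffun 'I_s -> 'I_4})
     \sum_(b : {ffun 'I_tau -> 'I_4}) (first a)%:R * (visits0 b)%:R * (\1_(EE a b) w : R).
  have mG : measurable_fun [set: T] G.
    by apply: measurable_sum => s; apply: (mF3 (fun s a b => (first a)%:R * (visits0 b)%:R)).
  have G0 : forall w, 0 <= G w.
    by move=> w; apply: sumr_ge0 => s _; apply: sumr_ge0 => a _; apply: sumr_ge0 => b _;
       rewrite !mulr_ge0 // indicE.
  have mN : measurable_fun [set: T]
     (fun w => (((\sum_(t1 <= t < (t2 + tau).+1) (X t w == z))%N%:R : R))).
    have -> : (fun w => (((\sum_(t1 <= t < (t2 + tau).+1) (X t w == z))%N%:R : R))) =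
       (fun w => \sum_(t <- index_iota t1 (t2 + tau).+1) (\1_(X t @^-1` [set z]) w : R)).
      apply: funext => w; rewrite natr_sum; apply: eq_bigr => t _; rewrite indicE.
      by case: (X t w =P z) => [e|ne]; [rewrite mem_set | rewrite memNset].
    by apply: measurable_sum => t; apply: measurable_indic; exact: mX.
  apply: (@le_trans _ _ (\int[P]_w (G w)%:E)%E); last first.
    apply: ge0_le_integral => //.
    - by move=> w _; rewrite lee_fin.
    - exact: mfEFin.
    - exact: mfEFin.
    - by move=> w _; rewrite lee_fin; apply: P2.
  rewrite /G (@int_F (fun s a b => (first a)%:R * (visits0 b)%:R)) //.
  rewrite lee_fin /L mulr_suml; apply: ler_sum => s _.
  rewrite mulr_suml; apply: ler_sum => a _.
  rewrite (eq_bigr (fun b => ((first a)%:R * Q (yv a) * pia a) * (rho s b * (visits0 b)%:R))); last first.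
    by move=> b _; ring.
  rewrite -mulr_sumr sum_rho_vis; apply: ler_wpM2l => //.
  by rewrite !mulr_ge0 // ?Q_ge0 ?pia_ge0.
apply: (le_trans stepA).
have -> : L = L * Rtau p tau * (Rtau p tau)^-1 by rewrite mulfK // gt_eqF.
rewrite EFinM; apply: lee_wpmul2r => //.
by rewrite lee_fin invr_ge0 ltW.
Qed.

End Main.

Theorem proposition2 (R : realType) (p : R) (tau : nat)
    (d : measure_display) (T : measurableType d) (P : probability T R)
    (x : nat -> Z2) (X : nat -> T -> Z2) (t1 t2 : nat) (z : Z2) :
  (0 < tau)%N -> 0 <= p <= 1 -> (t1 <= t2)%N ->
  instruction x -> guided_random_walk P p x X ->
  (P [set w | exists2 t, (t1 <= t <= t2)%N & X t w = z]
   <= (\int[P]_w ((\sum_(t1 <= t < (t2 + tau).+1) (X t w == z))%N%:R)%:E)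
      * ((Rtau p tau)^-1)%:E)%E.
Proof.
move=> tau0 p01 t12 xi grw.
exact: (main_ineq z tau0 p01 t12 xi grw).
Qed.
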